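(* The semi-metric space $(\mathcal D_n^+,d_s)$ is complete: every sequence $(\Delta^{(k)})_{k\ge0}$ in $\mathcal D_n^+$ such that for every $\varepsilon>0$ there is $K$ with $d_s(\Delta^{(p)},\Delta^{(q)})\le\varepsilon$ for all $p,q\ge K$ converges for $d_s$ to some $\Delta^{(\infty)}\in\mathcal D_n^+$, i.e. $d_s(\Delta^{(k)},\Delta^{(\infty)})\to0$.
   Context: $\mathcal D_n^+$ is the set of $n\times n$ diagonal matrices with positive diagonal entries, and $d_s(\Delta,\Delta')=\max_i\frac{|\Delta_i-\Delta'_i|}{\sqrt{\Delta_i\Delta'_i}}$. *)

(* Defs.v *)
From HB Require Import structures.
From mathcomp Require Import all_boot all_order all_algebra.
From mathcomp Require Import reals.
Set Implicit Arguments. Unset Strict Implicit. Unset Printing Implicit Defensive.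
Import Order.TTheory GRing.Theory Num.Theory.
Local Open Scope ring_scope.

Definition posdiag (R : realType) (n : nat) (D : 'M[R]_n) : Prop :=
  is_diag_mx D /\ forall i : 'I_n, 0 < D i i.

Definition d_s (R : realType) (n : nat) (D D' : 'M[R]_n) : R :=
  \big[Num.max/0]_(i < n) (`|D i i - D' i i| / Num.sqrt (D i i * D' i i)).

(* Main.v *)
Require Import Defs.
From HB Require Import structures.
From mathcomp Require Import all_boot all_order all_algebra.
From mathcomp Require Import all_classical all_reals all_analysis.
From mathcomp Require Import lra.
Import Order.TTheory GRing.Theory Num.Theory.
Import numFieldNormedType.Exports.
Local Open Scope classical_set_scope.
Local Open Scope ring_scope.

Lemma real_cauchy (R: realType) (u: nat -> R) :
  (forall e : R, 0 < e -> exists K : nat, forall p q : nat, (K <= p)%N -> (K <= q)%N -> `|u p - u q| <= e) ->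
  exists L : R, forall e : R, 0 < e -> exists K : nat, forall k : nat, (K <= k)%N -> `|u k - L| <= e.
Proof.
move=> Hc.
have : cvg (u @ \oo).
  apply: cauchy_cvg; apply: cauchy_exP => e e0.
  have [K HK] := Hc (e / 2) (divr_gt0 e0 (ltr0Sn _ 1)).
  exists (u K); exists K => // k /= Kk.
  rewrite /ball /=. apply: (le_lt_trans (HK K k (leqnn K) Kk)).
  by rewrite ltr_pdivrMr // ltr_pMr // ltr1n.
move=> /cvgrPdist_le H; exists (lim (u @ \oo)) => e e0.
have [N _ HN] := H e e0.
exists N => k Nk; rewrite distrC; exact: HN.
Qed.

Lemma three_bound (R : realType) (x y : R) : 0 < x -> 0 < y ->
  `|x - y| <= Num.sqrt (x * y) -> x <= 3 * y.
Proof.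
move=> x0 y0; rewrite ler_norml => /andP[h1 h2].
have s0 := sqrtr_ge0 (x * y).
have ss : Num.sqrt (x * y) * Num.sqrt (x * y) = x * y.
  by rewrite -expr2 sqr_sqrtr // mulr_ge0 // ltW.
nra.
Qed.

Lemma coord (R : realType) (u : nat -> R) : (forall k, 0 < u k) ->
  (forall e : R, 0 < e -> exists K : nat, forall p q : nat, (K <= p)%N -> (K <= q)%N ->
     `|u p - u q| / Num.sqrt (u p * u q) <= e) ->
  exists L : R, 0 < L /\ forall e : R, 0 < e -> exists K : nat, forall k : nat, (K <= k)%N ->
     `|u k - L| / Num.sqrt (u k * L) <= e.
Proof.
move=> upos Hc.
have dP : forall x y e : R, 0 < x -> 0 < y ->
    (`|x - y| / Num.sqrt (x * y) <= e) = (`|x - y| <= e * Num.sqrt (x * y)).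
  by move=> x y e x0 y0; rewrite ler_pdivrMr // sqrtr_gt0 mulr_gt0.
have [K0 HK0] := Hc 1 ltr01.
set a := u K0.
have a0 : 0 < a := upos K0.
have bnd : forall p, (K0 <= p)%N -> a <= 3 * u p /\ u p <= 3 * a.
  move=> p Kp; have := HK0 p K0 Kp (leqnn _); rewrite dP // ?mul1r => h; split.
    by apply: three_bound => //; rewrite distrC mulrC.
  exact: three_bound.
have sqb : forall x y : R, 0 <= x -> 0 <= y -> Num.sqrt (x * y) <= x + y.
  move=> x y x0 y0; rewrite -(ger0_norm (addr_ge0 x0 y0)) -sqrtr_sqr.
  rewrite ler_sqrt; last by rewrite sqr_ge0.
  nra.
have Cu : forall e : R, 0 < e -> exists K : nat, forall p q : nat, (K <= p)%N -> (K <= q)%N ->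
     `|u p - u q| <= e.
  move=> e e0.
  have e'0 : 0 < e / (6 * a) by rewrite divr_gt0 // mulr_gt0.
  have [K HK] := Hc _ e'0.
  exists (maxn K K0) => p q; rewrite !geq_max => /andP[Kp K0p] /andP[Kq K0q].
  have := HK p q Kp Kq; rewrite dP // => h.
  apply: (le_trans h).
  have [b1 b2] := bnd p K0p; have [b3 b4] := bnd q K0q.
  have := sqb (u p) (u q) (ltW (upos p)) (ltW (upos q)).
  move: e'0; set t := e / (6 * a) => t0.
  have te : t * (6 * a) = e by rewrite /t mulfVK // mulf_neq0 // ?pnatr_eq0 // gt_eqF.
  nra.
have [L HL] := @real_cauchy R u Cu.
have a60 : 0 < a / 6 by rewrite divr_gt0.
have La : a / 6 <= L.
  have a30 : 0 < a / 6 by rewrite divr_gt0.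
  have [K HK] := HL _ a30.
  have := HK (maxn K K0) (leq_maxl _ _); rewrite ler_norml => /andP[h1 h2].
  have [b1 _] := bnd (maxn K K0) (leq_maxr _ _).
  move: h1 h2 b1; set v := u (maxn K K0); move=> h1 h2 b1.
  have : a = 6 * (a / 6) by rewrite mulrC mulfVK // pnatr_eq0.
  nra.
have L0 : 0 < L := lt_le_trans a60 La.
exists L; split => // e e0.
have e'0 : 0 < e * (a / 5) by rewrite mulr_gt0 // divr_gt0.
have [K HK] := HL _ e'0.
exists (maxn K K0) => k; rewrite geq_max => /andP[Kk K0k].
rewrite dP //; apply: (le_trans (HK k Kk)); rewrite ler_pM2l //.
have [b1 _] := bnd k K0k.
have a5 : 0 <= a / 5 by rewrite ltW // divr_gt0.
rewrite -(ger0_norm a5) -sqrtr_sqr ler_sqrt; last by rewrite mulr_ge0 // ltW.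
have : a = 6 * (a / 6) by rewrite mulrC mulfVK // pnatr_eq0.
have : a = 5 * (a / 5) by rewrite mulrC mulfVK // pnatr_eq0.
move: a5; set c := a / 5; set d := a / 6 => a5 e5 e6.
nra.
Qed.


Theorem mainTheorem8 (R : realType) (n : nat) (Dk : nat -> 'M[R]_n) :
  (forall k, posdiag (Dk k)) ->
  (forall eps : R, 0 < eps -> exists K : nat, forall p q : nat,
      (K <= p)%N -> (K <= q)%N -> d_s (Dk p) (Dk q) <= eps) ->
  exists Dinf : 'M[R]_n, posdiag Dinf /\
    (forall eps : R, 0 < eps -> exists K : nat, forall k : nat,
      (K <= k)%N -> d_s (Dk k) Dinf <= eps).
Proof.
move=> Hpos Hc.
have Hi : forall i : 'I_n, exists L : R, 0 < L /\ forall e : R, 0 < e -> exists K : nat,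
    forall k : nat, (K <= k)%N -> `|Dk k i i - L| / Num.sqrt (Dk k i i * L) <= e.
  move=> i; apply: (@coord R (fun k => Dk k i i)).
    by move=> k; exact: (proj2 (Hpos k) i).
  move=> e e0; have [K HK] := Hc e e0; exists K => p q Kp Kq.
  apply: le_trans (HK p q Kp Kq); rewrite /d_s.
  exact: (le_bigmax 0 (fun j : 'I_n => `|Dk p j j - Dk q j j| / Num.sqrt (Dk p j j * Dk q j j)) i).
have [f Hf] := choice Hi.
exists (diag_mx (\row_i f i)); split.
  split; first exact: diag_mx_is_diag.
  by move=> i; rewrite !mxE eqxx mulr1n; exact: (proj1 (Hf i)).
move=> e e0.
have HK : forall i : 'I_n, exists K : nat, forall k : nat, (K <= k)%N ->
    `|Dk k i i - f i| / Num.sqrt (Dk k i i * f i) <= e.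
  by move=> i; exact: (proj2 (Hf i) e e0).
have [Kf HKf] := choice HK.
exists (\max_(i < n) Kf i) => k Kk.
rewrite /d_s; apply: bigmax_le; first exact: ltW.
move=> i _; rewrite !mxE eqxx mulr1n.
apply: HKf; exact: leq_trans (leq_bigmax i) Kk.
Qed.
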